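(* Let $M=\{m_1,m_2,m_3\}$ and $N=\{n_1,n_2,n_3\}$ be 3-element subsets of $\mathbb{N}$ (so the $m_i$ are pairwise distinct and the $n_i$ are pairwise distinct). For $X\subseteq\mathbb{N}$ let $S_X$ be the subsemigroup of $\mathbb{N}\times\mathbb{N}$ generated by $\{(1,x): x\in X\}$. Then there exists an isomorphism $\varphi:S_M\to S_N$ with $\varphi(1,m_i)=(1,n_i)$ for $i=1,2,3$ if and only if $$n_2(m_3-m_1)=n_1(m_3-m_2)+n_3(m_2-m_1).$$
   Context: $\mathbb{N}=\{1,2,3,\dots\}$ under addition, $\mathbb{N}\times\mathbb{N}$ with componentwise addition. *)

(* Defs.v *)
(* N = {1,2,3,...} is modelled inside nat; N x N as nat * nat
   with componentwise addition. *)
From Stdlib Require Import Arith ZArith.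

Definition padd (p q : nat * nat) : nat * nat := (fst p + fst q, snd p + snd q).

Inductive gen_sg (G : nat * nat -> Prop) : nat * nat -> Prop :=
| gen_base : forall p, G p -> gen_sg G p
| gen_add : forall p q, gen_sg G p -> gen_sg G q -> gen_sg G (padd p q).

Definition S3 (x1 x2 x3 : nat) : nat * nat -> Prop :=
  gen_sg (fun p => p = (1, x1) \/ p = (1, x2) \/ p = (1, x3)).

Definition sg_iso (A B : nat * nat -> Prop) (phi : nat * nat -> nat * nat) : Prop :=
  (forall p, A p -> B (phi p)) /\
  (forall p q, A p -> A q -> phi (padd p q) = padd (phi p) (phi q)) /\
  (forall p q, A p -> A q -> phi p = phi q -> p = q) /\
  (forall r, B r -> exists p, A p /\ phi p = r).

(* Main.v *)
Require Import Defs.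
From Stdlib Require Import Arith ZArith Lia.

Definition lc (x1 x2 x3 a1 a2 a3 : nat) : nat * nat :=
  (a1 + a2 + a3, a1 * x1 + a2 * x2 + a3 * x3).

Lemma lc_S1 x1 x2 x3 a1 a2 a3 p :
  padd (lc x1 x2 x3 (S a1) a2 a3) p = padd (lc x1 x2 x3 a1 a2 a3) (padd (1, x1) p).
Proof. unfold padd, lc; simpl; f_equal; lia. Qed.
Lemma lc_S2 x1 x2 x3 a1 a2 a3 p :
  padd (lc x1 x2 x3 a1 (S a2) a3) p = padd (lc x1 x2 x3 a1 a2 a3) (padd (1, x2) p).
Proof. unfold padd, lc; simpl; f_equal; lia. Qed.
Lemma lc_S3 x1 x2 x3 a1 a2 a3 p :
  padd (lc x1 x2 x3 a1 a2 (S a3)) p = padd (lc x1 x2 x3 a1 a2 a3) (padd (1, x3) p).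
Proof. unfold padd, lc; simpl; f_equal; lia. Qed.
Lemma lc_0 x1 x2 x3 p : padd (lc x1 x2 x3 0 0 0) p = p.
Proof. destruct p; unfold padd, lc; simpl; f_equal; lia. Qed.

Lemma lc_add_gen x1 x2 x3 a1 a2 a3 p :
  S3 x1 x2 x3 p -> S3 x1 x2 x3 (padd (lc x1 x2 x3 a1 a2 a3) p).
Proof.
  revert p; induction a1 as [|a1 IH1]; intros p Hp.
  - induction a2 as [|a2 IH2] in p, Hp |- *.
    + induction a3 as [|a3 IH3] in p, Hp |- *.
      * rewrite lc_0; exact Hp.
      * rewrite lc_S3; apply IH3; apply gen_add; [apply gen_base; auto|exact Hp].
    + rewrite lc_S2; apply IH2; apply gen_add; [apply gen_base; auto|exact Hp].
  - rewrite lc_S1; apply IH1; apply gen_add; [apply gen_base; auto|exact Hp].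
Qed.

Lemma lc_gen x1 x2 x3 a1 a2 a3 :
  1 <= a1 + a2 + a3 -> S3 x1 x2 x3 (lc x1 x2 x3 a1 a2 a3).
Proof.
  intros H.
  destruct a1 as [|a1].
  - destruct a2 as [|a2].
    + destruct a3 as [|a3]; [lia|].
      replace (lc x1 x2 x3 0 0 (S a3)) with (padd (lc x1 x2 x3 0 0 a3) (1, x3))
        by (unfold padd, lc; simpl; f_equal; lia).
      apply lc_add_gen; apply gen_base; auto.
    + replace (lc x1 x2 x3 0 (S a2) a3) with (padd (lc x1 x2 x3 0 a2 a3) (1, x2))
        by (unfold padd, lc; simpl; f_equal; lia).
      apply lc_add_gen; apply gen_base; auto.
  - replace (lc x1 x2 x3 (S a1) a2 a3) with (padd (lc x1 x2 x3 a1 a2 a3) (1, x1))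
      by (unfold padd, lc; simpl; f_equal; lia).
    apply lc_add_gen; apply gen_base; auto.
Qed.

Lemma gen_lc x1 x2 x3 p : S3 x1 x2 x3 p ->
  exists a1 a2 a3, 1 <= a1 + a2 + a3 /\ p = lc x1 x2 x3 a1 a2 a3.
Proof.
  unfold S3; induction 1 as [p Hp | p q _ IHa _ IHb].
  - destruct Hp as [ -> | [ -> | -> ] ].
    + exists 1, 0, 0; split; [lia|unfold lc; f_equal; lia].
    + exists 0, 1, 0; split; [lia|unfold lc; f_equal; lia].
    + exists 0, 0, 1; split; [lia|unfold lc; f_equal; lia].
  - destruct IHa as [a1 [a2 [a3 [Ha Ea]]]]; destruct IHb as [b1 [b2 [b3 [Hb Eb]]]]; subst.
    exists (a1+b1), (a2+b2), (a3+b3); split; [lia|].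
    unfold padd, lc; simpl; f_equal; ring.
Qed.

Lemma phi_lc (A : nat*nat -> Prop) phi m1 m2 m3 n1 n2 n3 :
  (forall p q, A p -> A q -> phi (padd p q) = padd (phi p) (phi q)) ->
  A (1, m1) -> A (1, m2) -> A (1, m3) ->
  (forall p q, A p -> A q -> A (padd p q)) ->
  phi (1, m1) = (1, n1) -> phi (1, m2) = (1, n2) -> phi (1, m3) = (1, n3) ->
  forall a1 a2 a3 p, A p ->
  phi (padd (lc m1 m2 m3 a1 a2 a3) p) = padd (lc n1 n2 n3 a1 a2 a3) (phi p).
Proof.
  intros Hadd G1 G2 G3 Hcl E1 E2 E3 a1.
  induction a1 as [|a1 IH1]; intros a2 a3 p Hp.
  - induction a2 as [|a2 IH2] in a3, p, Hp |- *.
    + induction a3 as [|a3 IH3] in p, Hp |- *.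
      * rewrite !lc_0; reflexivity.
      * rewrite lc_S3, IH3 by auto. rewrite Hadd, E3 by auto. rewrite <- lc_S3; reflexivity.
    + rewrite lc_S2, IH2 by auto. rewrite Hadd, E2 by auto. rewrite <- lc_S2; reflexivity.
  - rewrite lc_S1, IH1 by auto. rewrite Hadd, E1 by auto. rewrite <- lc_S1; reflexivity.
Qed.

Lemma padd_cancel a b q : padd a q = padd b q -> a = b.
Proof.
  destruct a, b, q; unfold padd; simpl; intros H; injection H; intros; f_equal; lia.
Qed.

Theorem lemma2p3 (m1 m2 m3 n1 n2 n3 : nat) :
  1 <= m1 -> 1 <= m2 -> 1 <= m3 -> 1 <= n1 -> 1 <= n2 -> 1 <= n3 ->
  m1 <> m2 -> m1 <> m3 -> m2 <> m3 ->
  n1 <> n2 -> n1 <> n3 -> n2 <> n3 ->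
  ((exists phi : nat * nat -> nat * nat,
      sg_iso (S3 m1 m2 m3) (S3 n1 n2 n3) phi /\
      phi (1, m1) = (1, n1) /\ phi (1, m2) = (1, n2) /\ phi (1, m3) = (1, n3))
   <->
   (Z.of_nat n2 * (Z.of_nat m3 - Z.of_nat m1)
    = Z.of_nat n1 * (Z.of_nat m3 - Z.of_nat m2)
      + Z.of_nat n3 * (Z.of_nat m2 - Z.of_nat m1))%Z).
Proof.
  intros Hm1 Hm2 Hm3 Hn1 Hn2 Hn3 D12 D13 D23 E12 E13 E23.
  split.
  - intros [phi [[Hin [Hadd [Hinj Hsur]]] [P1 [P2 P3]]]].
    assert (G1 : S3 m1 m2 m3 (1, m1)) by (apply gen_base; auto).
    assert (G2 : S3 m1 m2 m3 (1, m2)) by (apply gen_base; auto).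
    assert (G3 : S3 m1 m2 m3 (1, m3)) by (apply gen_base; auto).
    assert (Hcl : forall p q, S3 m1 m2 m3 p -> S3 m1 m2 m3 q -> S3 m1 m2 m3 (padd p q))
      by (intros; apply gen_add; auto).
    pose proof (phi_lc _ phi m1 m2 m3 n1 n2 n3 Hadd G1 G2 G3 Hcl P1 P2 P3) as K.
    set (P0 := padd (1, m1) (padd (1, m2) (1, m3))).
    assert (HP0 : S3 m1 m2 m3 P0) by (unfold P0; auto).
    assert (Eq : padd (lc m1 m2 m3 (m3-m2) (m1-m3) (m2-m1)) P0
               = padd (lc m1 m2 m3 (m2-m3) (m3-m1) (m1-m2)) P0).
    { f_equal. unfold lc. f_equal; [lia|].
      apply Nat2Z.inj. rewrite !Nat2Z.inj_add, !Nat2Z.inj_mul.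
      assert (A1 : Z.of_nat (m3-m2) = (Z.of_nat (m2-m3) + (Z.of_nat m3 - Z.of_nat m2))%Z) by lia.
      assert (A2 : Z.of_nat (m1-m3) = (Z.of_nat (m3-m1) + (Z.of_nat m1 - Z.of_nat m3))%Z) by lia.
      assert (A3 : Z.of_nat (m2-m1) = (Z.of_nat (m1-m2) + (Z.of_nat m2 - Z.of_nat m1))%Z) by lia.
      rewrite A1, A2, A3. ring. }
    assert (Eq2 := f_equal phi Eq).
    rewrite !K in Eq2 by exact HP0.
    apply padd_cancel in Eq2. unfold lc in Eq2. injection Eq2. intros H _.
    apply (f_equal Z.of_nat) in H.
    rewrite !Nat2Z.inj_add, !Nat2Z.inj_mul in H.
    assert (A1 : Z.of_nat (m3-m2) = (Z.of_nat (m2-m3) + (Z.of_nat m3 - Z.of_nat m2))%Z) by lia.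
    assert (A2 : Z.of_nat (m1-m3) = (Z.of_nat (m3-m1) + (Z.of_nat m1 - Z.of_nat m3))%Z) by lia.
    assert (A3 : Z.of_nat (m2-m1) = (Z.of_nat (m1-m2) + (Z.of_nat m2 - Z.of_nat m1))%Z) by lia.
    rewrite A1, A2, A3 in H. lia.
  - intros H.
    set (N1 := Z.of_nat n1) in *; set (N2 := Z.of_nat n2) in *; set (N3 := Z.of_nat n3) in *.
    set (M1 := Z.of_nat m1) in *; set (M2 := Z.of_nat m2) in *; set (M3 := Z.of_nat m3) in *.
    set (phi := fun p : nat * nat =>
      (fst p, Z.to_nat (((N3 - N1) * Z.of_nat (snd p) + (N1 * M3 - N3 * M1) * Z.of_nat (fst p))
                         / (M3 - M1)))).
    assert (Dz : (M3 - M1 <> 0)%Z) by (unfold M1, M3; lia).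
    assert (Key : forall a1 a2 a3, phi (lc m1 m2 m3 a1 a2 a3) = lc n1 n2 n3 a1 a2 a3).
    { intros a1 a2 a3. unfold phi, lc; simpl. f_equal.
      assert (Num : ((N3 - N1) * Z.of_nat (a1 * m1 + a2 * m2 + a3 * m3)
                     + (N1 * M3 - N3 * M1) * Z.of_nat (a1 + a2 + a3)
                    = Z.of_nat (a1 * n1 + a2 * n2 + a3 * n3) * (M3 - M1))%Z).
      { rewrite !Nat2Z.inj_add, !Nat2Z.inj_mul. fold M1 M2 M3 N1 N2 N3.
        apply Z.sub_move_0_r.
        transitivity (Z.of_nat a2 * (N1 * (M3 - M2) + N3 * (M2 - M1) - N2 * (M3 - M1)))%Z.
        - ring.
        - rewrite <- H. ring. }
      rewrite Num, Z.div_mul by exact Dz. apply Nat2Z.id. }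
    exists phi. split; [|split; [|split]].
    + split; [|split; [|split]].
      * intros p Hp. destruct (gen_lc _ _ _ _ Hp) as [a1 [a2 [a3 [Ha ->]]]].
        rewrite Key. apply lc_gen; exact Ha.
      * intros p q Hp Hq.
        destruct (gen_lc _ _ _ _ Hp) as [a1 [a2 [a3 [Ha ->]]]].
        destruct (gen_lc _ _ _ _ Hq) as [b1 [b2 [b3 [Hb ->]]]].
        replace (padd (lc m1 m2 m3 a1 a2 a3) (lc m1 m2 m3 b1 b2 b3))
          with (lc m1 m2 m3 (a1+b1) (a2+b2) (a3+b3)) by (unfold padd, lc; simpl; f_equal; ring).
        rewrite !Key. unfold padd, lc; simpl; f_equal; ring.
      * intros p q Hp Hq.
        destruct (gen_lc _ _ _ _ Hp) as [a1 [a2 [a3 [Ha ->]]]].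
        destruct (gen_lc _ _ _ _ Hq) as [b1 [b2 [b3 [Hb ->]]]].
        rewrite !Key. unfold lc. intros E. injection E. intros E2 E1.
        f_equal; [exact E1|].
        apply (f_equal Z.of_nat) in E1. apply (f_equal Z.of_nat) in E2.
        apply Nat2Z.inj. rewrite !Nat2Z.inj_add in E1. rewrite !Nat2Z.inj_add, !Nat2Z.inj_mul in E2 |- *.
        fold M1 M2 M3 N1 N2 N3 in E1, E2 |- *.
        set (e1 := (Z.of_nat a1 - Z.of_nat b1)%Z) in *.
        set (e2 := (Z.of_nat a2 - Z.of_nat b2)%Z) in *.
        set (e3 := (Z.of_nat a3 - Z.of_nat b3)%Z) in *.
        assert (F1 : (e1 + e2 + e3 = 0)%Z) by (unfold e1, e2, e3; lia).
        assert (F2 : (e1 * N1 + e2 * N2 + e3 * N3 = 0)%Z) by (unfold e1, e2, e3; lia).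
        assert (F3 : ((N3 - N1) * (e1 * M1 + e2 * M2 + e3 * M3) = 0)%Z).
        { transitivity ((M3 - M1) * (e1 * N1 + e2 * N2 + e3 * N3)
                         - (N1 * M3 - N3 * M1) * (e1 + e2 + e3)
                         + e2 * (N1 * (M3 - M2) + N3 * (M2 - M1) - N2 * (M3 - M1)))%Z.
          - ring.
          - rewrite F1, F2, <- H. ring. }
        apply Z.mul_eq_0 in F3. destruct F3 as [F3|F3]; [unfold N1, N3 in F3; lia|].
        unfold e1, e2, e3 in F3. lia.
      * intros r Hr. destruct (gen_lc _ _ _ _ Hr) as [a1 [a2 [a3 [Ha ->]]]].
        exists (lc m1 m2 m3 a1 a2 a3). split; [apply lc_gen; exact Ha| apply Key].
    + replace (1, m1) with (lc m1 m2 m3 1 0 0) by (unfold lc; f_equal; lia).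
      rewrite Key. unfold lc; f_equal; lia.
    + replace (1, m2) with (lc m1 m2 m3 0 1 0) by (unfold lc; f_equal; lia).
      rewrite Key. unfold lc; f_equal; lia.
    + replace (1, m3) with (lc m1 m2 m3 0 0 1) by (unfold lc; f_equal; lia).
      rewrite Key. unfold lc; f_equal; lia.
Qed.
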